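(* If the toric algebra $A_{\mathscr{E}}$ is consistent, then $x^{\operatorname{div}(a)}$ divides $\prod_{\rho\in\sigma(1)}x_\rho$ for every arrow $a\in Q_1$.
   Context: Let $\mathbb{k}$ be an algebraically closed field and $X=\operatorname{Spec}R$ a normal affine toric variety of dimension $n$ with a torus-fixed point, $R=\mathbb{k}[\sigma^\vee\cap M]$, $\sigma\subset N\otimes\mathbb{R}$ strongly convex rational polyhedral. Let $\sigma(1)$ be the rays, $d=|\sigma(1)|$, $v_\rho$ primitive generators, $D_\rho$ toric prime divisors, torus-invariant divisors identified with $\mathbb{Z}^d$, $\deg:\mathbb{Z}^d\to\operatorname{Cl}(X)$ the class map with kernel the image of $M$ under $u\mapsto\sum\langle u,v_\rho\rangle D_\rho$. Cox ring $\mathbb{k}[x_\rho]$, $x^D=\prod x_\rho^{D_\rho}$. Assume $X$ is Gorenstein: $(1,\dots,1)\in\mathbb{Z}^d$ lies in the image of $M$. Let $\mathscr{E}=(E_0=\mathcal{O}_X,E_1,\dots,E_r)$ be pairwise distinct rank one reflexive sheaves, $E_i=\mathcal{O}_X(D_i')$, and $Q$ its quiver of sections: vertices $0,\dots,r$; an arrow $a:i\to j$ with label $\operatorname{div}(a)\in\mathbb{N}^d$ for each irreducible $T_M$-invariant section $x^{\operatorname{div}(a)}$ of $\operatorname{Hom}(E_i,E_j)\cong H^0(\mathcal{O}_X(D_j'-D_i'))$ (irreducible: not in the image of multiplication through any $E_k$, $k\neq i,j$). Paths compose right to left; $\operatorname{div}(p)$ is the sum of labels of arrows of $p$. $J_{\mathscr{E}}$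 is generated by $p^+-p^-$ over pairs of paths with equal head, tail and label; $A_{\mathscr{E}}=\mathbb{k}Q/J_{\mathscr{E}}$. A cycle $p$ is anticanonical if $x^{\operatorname{div}(p)}=\prod_\rho x_\rho$. For a path $q$, $\partial_qW$ is the sum of all paths $p$ with $\mathsf{t}(p)=\mathsf{h}(q)$, $\mathsf{h}(p)=\mathsf{t}(q)$, $x^{\operatorname{div}(p)}=\prod_\rho x_\rho/x^{\operatorname{div}(q)}$. $\mathscr{P}$ is the set of paths $q$ with $\partial_qW$ a sum of precisely two paths sharing neither initial nor final arrow; $J_W$ is generated by $p^+-p^-$ whenever $\partial_qW=p^++p^-$, $q\in\mathscr{P}$. $A_{\mathscr{E}}$ is consistent if $J_W=J_{\mathscr{E}}$. *)

(* Defs.v *)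
From HB Require Import structures.
From mathcomp Require Import all_boot all_order all_algebra.

Set Implicit Arguments.
Unset Strict Implicit.
Unset Printing Implicit Defensive.

Import Order.TTheory GRing.Theory Num.Theory.
Local Open Scope ring_scope.

Section Toric.

(* d = |sigma(1)|, n = rank of N, r+1 = number of sheaves *)
Variables (d n r : nat).
(* primitive ray generators v_rho in N = Z^n *)
Variable v : 'I_d -> 'I_n -> int.
(* torus-invariant divisors D'_i, i = 0..r, as elements of Z^d *)
Variable D' : 'I_r.+1 -> 'I_d -> int.

Definition pairing (u w : 'I_n -> int) : int := \sum_(k < n) u k * w k.

Definition inM (D : 'I_d -> int) : Prop :=
  exists u : 'I_n -> int, forall rho, D rho = pairing u (v rho).

Definition lin_equiv (D1 D2 : 'I_d -> int) : Prop :=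
  inM (fun rho => D1 rho - D2 rho).

Definition ray_mx : 'M[rat]_(d, n) := \matrix_(i, j) (v i j)%:~R.

(* sigma = cone(v_rho) is a strongly convex rational polyhedral cone,
   the v_rho are primitive and are exactly the rays of sigma, and
   sigma is full dimensional (X has a torus-fixed point). *)
Record toric_cone : Prop := {
  tc_primitive : forall rho (m : int) (w : 'I_n -> int),
      (forall k, v rho k = m * w k) -> `|m| = 1;
  tc_strongly_convex : forall c : 'I_d -> rat,
      (forall rho, 0 <= c rho) ->
      (forall k, \sum_(rho < d) c rho * (v rho k)%:~R = 0) ->
      forall rho, c rho = 0;
  tc_rays_extremal : forall rho, ~ exists c : 'I_d -> rat,
      [/\ forall rho', 0 <= c rho', c rho = 0 &
          forall k, (v rho k)%:~R = \sum_(rho' < d) c rho' * (v rho' k)%:~R];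
  tc_full_dim : \rank ray_mx = n
}.

Definition gorenstein : Prop := inM (fun _ => 1).

Definition monomial_divides (u w : {ffun 'I_d -> nat}) : Prop :=
  forall rho, (u rho <= w rho)%N.

Definition ones : {ffun 'I_d -> nat} := [ffun _ => 1%N].

(* x^u (u in N^d) is a T_M-invariant section of Hom(E_i,E_j) = H^0(O(D'_j - D'_i)) *)
Definition is_section (i j : 'I_r.+1) (u : {ffun 'I_d -> nat}) : Prop :=
  lin_equiv (fun rho => (u rho)%:Z) (fun rho => D' j rho - D' i rho).

Definition arrow := ('I_r.+1 * 'I_r.+1 * {ffun 'I_d -> nat})%type.
Definition atail (a : arrow) : 'I_r.+1 := a.1.1.
Definition ahead (a : arrow) : 'I_r.+1 := a.1.2.
Definition alabel (a : arrow) : {ffun 'I_d -> nat} := a.2.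

(* arrows of the quiver of sections: irreducible nonconstant sections *)
Definition is_arrow (a : arrow) : Prop :=
  let: (i, j, u) := a in
  [/\ is_section i j u,
      exists rho, u rho != 0%N &
      ~ exists k u1 u2, [/\ k != i, k != j, is_section i k u1,
                            is_section k j u2 &
                            forall rho, u rho = (u1 rho + u2 rho)%N]].

(* a path: starting vertex and the list of arrows in the order traversed *)
Definition path := ('I_r.+1 * seq arrow)%type.
Definition ptail (p : path) : 'I_r.+1 := p.1.
Definition phead (p : path) : 'I_r.+1 := last p.1 (map ahead p.2).

Fixpoint chain (t : 'I_r.+1) (s : seq arrow) : Prop :=
  match s with
  | [::] => True
  | a :: s' => atail a = t /\ chain (ahead a) s'
  end.

Definition is_path (p : path) : Prop :=
  (forall a, a \in p.2 -> is_arrow a) /\ chain p.1 p.2.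

Definition plabel (p : path) : {ffun 'I_d -> nat} :=
  [ffun rho => \sum_(a <- p.2) alabel a rho].

(* traverse p, then q  (i.e. q * p with right-to-left composition) *)
Definition pcat (p q : path) : path := (p.1, p.2 ++ q.2).

Definition first_arrow (p : path) : option arrow := ohead p.2.
Definition last_arrow (p : path) : option arrow := ohead (rev p.2).

(* The two-sided ideal of the path algebra kQ (elements = functions
   path -> K, coefficient of each path) generated by the elements
   p - q for (p,q) in G: the K-span of the elements a.p.b - a.q.b,
   a, b paths composable with p (and q). *)
Definition ideal_gen (K : fieldType) (G : path -> path -> Prop)
    (f : path -> K) : Prop :=
  exists s : seq (K * path * path * path * path),
    (forall t, t \in s -> let: (c, a, p, q, b) := t in
       [/\ G p q, is_path a, is_path b, phead a = ptail p & phead p = ptail b])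
    /\ forall x, f x = \sum_(t <- s) let: (c, a, p, q, b) := t in
         c * ((x == pcat (pcat a p) b)%:R - (x == pcat (pcat a q) b)%:R).

Definition GE (p q : path) : Prop :=
  [/\ is_path p, is_path q, ptail p = ptail q, phead p = phead q &
      plabel p = plabel q].

(* p is a summand of \partial_q W *)
Definition dW (q p : path) : Prop :=
  [/\ is_path p, ptail p = phead q, phead p = ptail q &
      forall rho, (plabel p rho + plabel q rho)%N = 1%N].

(* generators of J_W: \partial_q W = p1 + p2 with q in the set P *)
Definition GW (p1 p2 : path) : Prop :=
  exists q, [/\ is_path q, p1 <> p2, dW q p1, dW q p2 &
     [/\ (forall p, dW q p -> p = p1 \/ p = p2),
          first_arrow p1 <> first_arrow p2 &
          last_arrow p1 <> last_arrow p2]].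

Definition consistent (K : fieldType) : Prop :=
  forall f : path -> K, ideal_gen GW f <-> ideal_gen GE f.

End Toric.

(* Main.v *)
Require Import Defs.
From Stdlib Require Import Classical.
From mathcomp Require Import all_boot all_order all_algebra.
Set Implicit Arguments. Unset Strict Implicit. Unset Printing Implicit Defensive.
Import GRing.Theory.
Local Open Scope ring_scope.
Section S.
Variables (d n r : nat) (v : 'I_d -> 'I_n -> int) (D' : 'I_r.+1 -> 'I_d -> int).
Local Notation arr := (arrow d r).
Local Notation lab := {ffun 'I_d -> nat}.

Definition lsum (s : seq arr) : lab := [ffun rho => (\sum_(a <- s) alabel a rho)%N].
Definition addf (l1 l2 : lab) : lab := [ffun rho => (l1 rho + l2 rho)%N].
Definition good (e : arr) : bool := [forall rho, (alabel e rho <= 1)%N].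

Fixpoint inv (l : lab) (s : seq arr) : seq (arr * lab) :=
  match s with
  | [::] => [::]
  | e :: s' => (if good e then [::] else [:: (e, l)]) ++ inv (addf l (alabel e)) s'
  end.

Lemma lsum_cat s1 s2 : lsum (s1 ++ s2) = addf (lsum s1) (lsum s2).
Proof. by apply/ffunP => rho; rewrite !ffunE big_cat. Qed.

Lemma addfA a b c : addf a (addf b c) = addf (addf a b) c.
Proof. by apply/ffunP => rho; rewrite !ffunE addnA. Qed.

Lemma inv_cat l s1 s2 : inv l (s1 ++ s2) = inv l s1 ++ inv (addf l (lsum s1)) s2.
Proof.
elim: s1 l => [|e s1 IH] l /=.
  congr inv; apply/ffunP => rho; rewrite !ffunE big_nil addn0 //.
rewrite IH catA; congr (_ ++ inv _ _).
apply/ffunP => rho; rewrite !ffunE big_cons addnA //.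
Qed.

Lemma inv_good l s : (forall e, e \in s -> good e) -> inv l s = [::].
Proof.
elim: s l => [|e s IH] l //= H.
rewrite H ?mem_head //= IH //; first by move=> e' He'; apply: H; rewrite in_cons He' orbT.
Qed.

Lemma le_lsum e s rho : e \in s -> (alabel e rho <= lsum s rho)%N.
Proof.
rewrite ffunE; elim: s => [|x s IH] //=; rewrite in_cons big_cons.
case/orP => [/eqP->|/IH H]; first exact: leq_addr.
exact: leq_trans H (leq_addl _ _).
Qed.

Lemma good_of s : (forall rho, lsum s rho <= 1)%N -> forall e, e \in s -> good e.
Proof.
move=> H e He; apply/forallP => rho; exact: leq_trans (le_lsum rho He) (H rho).
Qed.

Lemma chain_cat t s1 s2 : chain t (s1 ++ s2) <-> chain t s1 /\ chain (last t (map (@ahead d r) s1)) s2.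
Proof.
elim: s1 t => [|e s1 IH] t /=; first by tauto.
have := IH (ahead e); tauto.
Qed.

Lemma sum_pick (T : eqType) (K : fieldType) (L : seq T) (F : T -> K) w :
  uniq L -> w \in L -> \sum_(z <- L) F z * (z == w)%:R = F w.
Proof.
elim: L => [|x L IH] //= /andP[xL uL]; rewrite in_cons big_cons.
case: (eqVneq w x) => [->|wx] /=.
  move=> _; rewrite mulr1 big_seq big1 ?addr0 // => z zL.
  by rewrite (_ : (z == x) = false) ?mulr0 //; apply/negbTE; apply: contraNneq xL => <-.
by move=> wL; rewrite mulr0 add0r IH.
Qed.

Lemma sum_pos (u : lab) rho : u rho != 0%N -> (0 < \sum_(k < d) u k)%N.
Proof.
move=> H; rewrite (bigD1 rho) //=; apply: leq_trans (leq_addr _ _); by rewrite lt0n.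
Qed.

Lemma factor (Hd : forall i j, i != j -> ~ lin_equiv v (D' i) (D' j)) m :
  forall (u : lab) i j, (\sum_(k < d) u k < m)%N -> is_section v D' i j u ->
  (exists rho, u rho != 0%N) ->
  exists p : Defs.path d r, [/\ is_path v D' p, ptail p = i, phead p = j & plabel p = u].
Proof.
elim: m => [|m IH] u i j //= Hm Hs Hnz.
case: (Classical_Prop.classic (exists k u1 u2, [/\ k != i, k != j, is_section v D' i k u1,
                            is_section v D' k j u2 &
                            forall rho, u rho = (u1 rho + u2 rho)%N])) => Hirr.
  case: Hirr => k [u1 [u2 [ki kj s1 s2 Hu]]].
  have nz1 : exists rho, u1 rho != 0%N.
    apply: Classical_Prop.NNPP => H0.
    apply: (Hd i k); first by rewrite eq_sym.
    case: s1 => w Hw; exists w => rho; rewrite -Hw.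
    have -> : u1 rho = 0%N by apply/eqP; apply: Classical_Prop.NNPP => H1; apply: H0; exists rho; apply/negP.
    by rewrite sub0r opprB.
  have nz2 : exists rho, u2 rho != 0%N.
    apply: Classical_Prop.NNPP => H0.
    apply: (Hd k j) => //.
    case: s2 => w Hw; exists w => rho; rewrite -Hw.
    have -> : u2 rho = 0%N by apply/eqP; apply: Classical_Prop.NNPP => H1; apply: H0; exists rho; apply/negP.
    by rewrite sub0r opprB.
  have Hsum : (\sum_(k < d) u k = \sum_(k < d) u1 k + \sum_(k < d) u2 k)%N.
    by rewrite -big_split; apply: eq_bigr => rho _; rewrite Hu.
  case: nz1 => rho1 Hr1; case: nz2 => rho2 Hr2.
  have p1s := sum_pos Hr1; have p2s := sum_pos Hr2.
  have [[t1 q1] [P1 T1 H1 L1]] : exists p : Defs.path d r, [/\ is_path v D' p, ptail p = i, phead p = k & plabel p = u1].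
    apply: IH => //; last by exists rho1.
    rewrite Hsum in Hm; rewrite -ltnS; apply: leq_trans Hm; rewrite ltnS; rewrite -addn1 leq_add2l //.
  have [[t2 q2] [P2 T2 H2 L2]] : exists p : Defs.path d r, [/\ is_path v D' p, ptail p = k, phead p = j & plabel p = u2].
    apply: IH => //; last by exists rho2.
    rewrite Hsum in Hm; rewrite -ltnS; apply: leq_trans Hm; rewrite ltnS; rewrite -add1n leq_add2r //.
  rewrite /ptail /= in T1 T2; subst t1 t2.
  exists (i, q1 ++ q2); split => //.
  - case: P1 => A1 C1; case: P2 => A2 C2; split.
      by move=> a /=; rewrite mem_cat => /orP[/A1|/A2].
    by apply/chain_cat; split => //=; rewrite -/(phead (i, q1)) H1.
  - by rewrite /phead /= map_cat last_cat -/(phead (i, q1)) H1.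
  - apply/ffunP => rho; rewrite ffunE /= big_cat /=.
    have E1 := congr1 (fun f : lab => f rho) L1; have E2 := congr1 (fun f : lab => f rho) L2.
    by rewrite /= !ffunE /= in E1 E2; rewrite E1 E2 Hu.
exists (i, [:: (i, j, u)]); split.
- split; last by split.
  by move=> a; rewrite inE => /eqP ->; split.
- by [].
- by [].
- by apply/ffunP => rho; rewrite ffunE big_seq1.
Qed.
End S.

Theorem proposition3p6 (K : closedFieldType) (d n r : nat)
    (v : 'I_d -> 'I_n -> int) (D' : 'I_r.+1 -> 'I_d -> int) :
  toric_cone v ->
  gorenstein v ->
  lin_equiv v (D' ord0) (fun _ => 0) ->
  (forall i j : 'I_r.+1, i != j -> ~ lin_equiv v (D' i) (D' j)) ->
  consistent v D' K ->
  forall a : arrow d r, is_arrow v D' a ->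
    monomial_divides (alabel a) (ones d).
Proof.
move=> Htc Hgor H0 Hd Hcons [[i j] u] Harr.
case: (Harr) => Hsec [rho0 Hrho0] Hirr.
rewrite /monomial_divides /alabel /=.
case: (boolP [forall rho, u rho <= 1]%N) => [/forallP H rho|Hbad].
  by rewrite ffunE; apply: H.
exfalso.
set a : arrow d r := (i, j, u).
have ones_sec : forall t, is_section v D' t t (ones d).
  move=> t; case: Hgor => w Hw; exists w => rho; rewrite -Hw ffunE subrr subr0 //.
have ones_nz : exists rho, ones d rho != 0%N by exists rho0; rewrite ffunE.
have [[tc c] [Pc Tc Hc Lc]] := factor Hd (ltnSn (\sum_k ones d k)) (ones_sec j) ones_nz.
have [[tc' c'] [Pc' Tc' Hc' Lc']] := factor Hd (ltnSn (\sum_k ones d k)) (ones_sec i) ones_nz.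
rewrite /ptail /= in Tc Tc'; subst tc tc'.
have gc : forall e, e \in c -> good e.
  apply: good_of => rho; have := congr1 (fun f : {ffun 'I_d -> nat} => f rho) Lc.
  by rewrite /= /plabel /lsum !ffunE => ->.
have gc' : forall e, e \in c' -> good e.
  apply: good_of => rho; have := congr1 (fun f : {ffun 'I_d -> nat} => f rho) Lc'.
  by rewrite /= /plabel /lsum !ffunE => ->.
set x : Defs.path d r := (i, a :: c).
set y : Defs.path d r := (i, c' ++ [:: a]).
have Px : is_path v D' x.
  case: Pc => A C; split.
    by move=> e; rewrite inE => /orP[/eqP->|/A].
  by split.
have Py : is_path v D' y.
  case: Pc' => A C; split.
    by move=> e; rewrite mem_cat inE => /orP[/A|/eqP->].
  by apply/(chain_cat D'); split => //; rewrite -/(phead (i, c')) Hc'.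
have Hx : phead x = j by [].
have Hy : phead y = j by rewrite /phead /= map_cat last_cat.
have Lxy : plabel x = plabel y.
  apply/ffunP => rho.
  have E := congr1 (fun f : {ffun 'I_d -> nat} => f rho) Lc.
  have E' := congr1 (fun f : {ffun 'I_d -> nat} => f rho) Lc'.
  rewrite /= !ffunE /= in E E'.
  rewrite !ffunE /= big_cons big_cat big_seq1 E E'; exact: addnC.
set f : Defs.path d r -> K := fun z => (z == x)%:R - (z == y)%:R.
have HGE : ideal_gen v D' (GE v D') f.
  exists [:: (1, (i, [::]), x, y, (j, [::]))]; split.
    move=> t; rewrite inE => /eqP -> /=; split.
    - by split; rewrite ?Hy.
    - by split.
    - by split.
    - by [].
    - by [].
  by move=> z; rewrite big_seq1 mul1r /f /pcat /= !cats0.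
have [s [Hs Hf]] := proj2 (Hcons f) HGE.
set zero : {ffun 'I_d -> nat} := [ffun => 0%N].
pose P (z : Defs.path d r) : bool := inv zero z.2 == [:: (a, zero)].
have PI : forall t, t \in s -> let: (c0, A, p, q, B) := t in
    P (pcat (pcat A p) B) = P (pcat (pcat A q) B).
  move=> [[[[c0 A] p] q] B] /Hs [[q0 [_ _ d1 d2 _]] _ _ _ _].
  have gp : forall (p1 : Defs.path d r), dW v D' q0 p1 -> forall e, e \in p1.2 -> good e.
    move=> p1 [_ _ _ H]; apply: good_of => rho; rewrite -(H rho); exact: leq_addr.
  have Lpq : lsum p.2 = lsum q.2.
    apply/ffunP => rho; case: d1 => _ _ _ E1; case: d2 => _ _ _ E2.
    by apply/eqP; rewrite -(eqn_add2r (plabel q0 rho)) E1 E2.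
  rewrite /P /pcat /= !inv_cat (inv_good _ (gp _ d1)) (inv_good _ (gp _ d2)) !lsum_cat Lpq //.
pose g (t : K * Defs.path d r * Defs.path d r * Defs.path d r * Defs.path d r) :=
  [:: pcat (pcat t.1.1.1.2 t.1.1.2) t.2; pcat (pcat t.1.1.1.2 t.1.2) t.2].
set L := undup (x :: y :: flatten [seq g t | t <- s]).
have uL : uniq L by exact: undup_uniq.
have inL : forall t, t \in s -> forall z, z \in g t -> z \in L.
  move=> t ts z zg; rewrite mem_undup !inE; apply/orP; right; apply/orP; right.
  by apply/flattenP; exists (g t) => //; apply: map_f.
have S1 : \sum_(z <- L) (P z)%:R * f z = 1.
  rewrite /f; under eq_bigr do rewrite mulrBr.
  rewrite sumrB !sum_pick // ?mem_undup ?inE ?eqxx ?orbT //.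
  have -> : P x.
    rewrite /P /= inv_good // (_ : good a = false) //; exact: negbTE Hbad.
  have -> : P y = false.
    rewrite /P /= inv_cat (inv_good _ gc') /=.
    apply/negP => /eqP; rewrite (_ : good a = false); last exact: negbTE Hbad.
    move=> [] E.
    have := congr1 (fun f : {ffun 'I_d -> nat} => f rho0) E.
    have := congr1 (fun f : {ffun 'I_d -> nat} => f rho0) Lc'.
    by rewrite /= !ffunE /= => ->.
  by rewrite subr0.
have S0 : \sum_(z <- L) (P z)%:R * f z = 0.
  under eq_bigr do rewrite Hf big_distrr.
  rewrite exchange_big /=; apply: big1_seq => t /andP[_ ts].
  have := PI t ts; have := inL t ts.
  case: t ts => [[[[c0 A] p] q] B] ts /= HinL HP.
  under eq_bigr do rewrite mulrCA.
  rewrite -big_distrr /=; under eq_bigr do rewrite mulrBr.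
  rewrite sumrB !sum_pick //; first by rewrite HP subrr mulr0.
  - by apply: HinL; rewrite !inE eqxx orbT.
  - by apply: HinL; rewrite !inE eqxx.
have : (1 : K) = 0 by rewrite -S1 S0.
by move/eqP; rewrite oner_eq0.
Qed.
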